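(* Let $X$ be an $L$-topological space and let $Y$ be an $L$-sober space. The following are equivalent: (1) $Y$ is an $L$-sobrification of $X$; (2) there exists a quasihomeomorphism $j:X\to Y$; (3) $(\mathcal O(X),{\rm sub}_X)$ and $(\mathcal O(Y),{\rm sub}_Y)$ are $L$-order-isomorphic.
   Context: $L$ is a frame with implication $\to$. $L$-subsets of $X$ are maps $X\to L$; $a_X$ the constant with value $a$; ${\rm sub}_X(A,B)=\bigwedge_xA(x)\to B(x)$; $f^\leftarrow(B)=B\circ f$. An $L$-topology on $X$ is $\mathcal O(X)\subseteq L^X$ closed under finite meets and arbitrary joins containing all constants $a_X$; a map $f$ is continuous if $f^\leftarrow(B)\in\mathcal O(X)$ for all $B\in\mathcal O(Y)$. A point of $\mathcal O(X)$ is $p:\mathcal O(X)\to L$ with $p(A\wedge B)=p(A)\wedge p(B)$, $p(\bigvee_iA_i)=\bigvee_ip(A_i)$, $p(\lambda_X)=\lambda$; $[x](A)=A(x)$; $X$ is $L$-sober if $x\mapsto[x]$ is a bijection from $X$ onto the set of points. An $L$-sobrification of $X$ is an $L$-sober space $Y$ with a continuous $j:X\to Y$ such that for every $L$-sober $Z$ and continuous $f:X\to Z$ there is a unique continuous $\bar f:Y\to Z$ with $\bar f\circ j=f$. A map $f:X\to Y$ is a quasihomeomorphism if $f^\leftarrow:\mathcal O(Y)\to\mathcal O(X)$, $B\mapsto B\circ f$, is a well-defined bijection. An $L$-order-isomorphism between $(\mathcal O(X),{\rm sub}_X)$ and $(\mathcal O(Y),{\rm sub}_Y)$ is a bijection $g$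 with ${\rm sub}_Y(g(A),g(B))={\rm sub}_X(A,B)$. *)

(* Defs.v *)
Set Implicit Arguments.
Unset Strict Implicit.

(* A frame with implication = complete Heyting algebra:
   complete lattice (arbitrary sups) with binary meets and a Heyting
   implication right adjoint to meet. *)
Record frame := Frame {
  fcar :> Type;
  fle : fcar -> fcar -> Prop;
  fmeet : fcar -> fcar -> fcar;
  fsup : (fcar -> Prop) -> fcar;
  fimp : fcar -> fcar -> fcar;
  fle_refl : forall a, fle a a;
  fle_trans : forall a b c, fle a b -> fle b c -> fle a c;
  fle_antisym : forall a b, fle a b -> fle b a -> a = b;
  fmeet_glb : forall a b c, fle c (fmeet a b) <-> (fle c a /\ fle c b);
  fsup_lub : forall (S : fcar -> Prop) c, fle (fsup S) c <-> (forall a, S a -> fle a c);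
  fimp_adj : forall a b c, fle c (fimp a b) <-> fle (fmeet c a) b
}.

Section Defs.
Variable L : frame.

Definition fjoin (I : Type) (f : I -> L) : L := fsup (fun a => exists i, a = f i).
Definition finf (S : L -> Prop) : L := fsup (fun c => forall a, S a -> fle c a).

Definition cst (X : Type) (a : L) : X -> L := fun _ => a.
Arguments cst X a : clear implicits.

Definition subX (X : Type) (A B : X -> L) : L :=
  finf (fun c => exists x, c = fimp (A x) (B x)).

Definition preim (X Y : Type) (f : X -> Y) (B : Y -> L) : X -> L := fun x => B (f x).

Definition is_Ltopology (X : Type) (O : (X -> L) -> Prop) : Prop :=
  (forall A B, O A -> O B -> O (fun x => fmeet (A x) (B x))) /\
  (forall (I : Type) (A : I -> X -> L), (forall i, O (A i)) ->
       O (fun x => fjoin (fun i => A i x))) /\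
  (forall a : L, O (cst X a)).

Record LTop := mkLTop {
  lpt :> Type;
  lopen : (lpt -> L) -> Prop;
  lopen_ax : is_Ltopology lopen
}.

Definition Lcontinuous (X Y : LTop) (f : X -> Y) : Prop :=
  forall B, lopen B -> lopen (preim f B).

(* points of O(X): maps O(X) -> L, represented by p : (X -> L) -> L whose
   behaviour on opens is what matters *)
Definition is_point (X : LTop) (p : (X -> L) -> L) : Prop :=
  (forall A B, lopen A -> lopen B ->
      p (fun x => fmeet (A x) (B x)) = fmeet (p A) (p B)) /\
  (forall (I : Type) (A : I -> X -> L), (forall i, lopen (A i)) ->
      p (fun x => fjoin (fun i => A i x)) = fjoin (fun i => p (A i))) /\
  (forall a : L, p (cst X a) = a).

Definition pt_of (X : LTop) (x : X) : (X -> L) -> L := fun A => A x.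

(* L-sober: x |-> [x] is a bijection onto the points (maps on O(X),
   hence compared on open L-subsets) *)
Definition Lsober (X : LTop) : Prop :=
  (forall x y : X, (forall A, lopen A -> pt_of x A = pt_of y A) -> x = y) /\
  (forall p, is_point p -> exists x : X, forall A, lopen A -> p A = pt_of x A).

Definition Lsobrification (X Y : LTop) : Prop :=
  Lsober Y /\
  exists j : X -> Y, Lcontinuous j /\
    forall (Z : LTop) (f : X -> Z), Lsober Z -> Lcontinuous f ->
      exists g : Y -> Z, Lcontinuous g /\ (forall x, g (j x) = f x) /\
        (forall g' : Y -> Z, Lcontinuous g' -> (forall x, g' (j x) = f x) ->
           forall y, g' y = g y).

Definition quasihomeo (X Y : LTop) (f : X -> Y) : Prop :=
  (forall B, lopen B -> lopen (preim f B)) /\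
  (forall B B', lopen B -> lopen B' -> preim f B = preim f B' -> B = B') /\
  (forall A, lopen A -> exists B, lopen B /\ preim f B = A).

Definition Lorder_iso (X Y : LTop) (g : (X -> L) -> (Y -> L)) : Prop :=
  (forall A, lopen A -> lopen (g A)) /\
  (forall A A', lopen A -> lopen A' -> g A = g A' -> A = A') /\
  (forall B, lopen B -> exists A, lopen A /\ g A = B) /\
  (forall A B, lopen A -> lopen B -> subX (g A) (g B) = subX A B).

End Defs.

(* Main.v *)
Require Import Defs.
From Stdlib Require Import ClassicalEpsilon FunctionalExtensionality ProofIrrelevance.
Set Implicit Arguments.
Unset Strict Implicit.

Lemma fsup_ub (L : frame) (S : L -> Prop) a : S a -> fle a (fsup S).
Proof. intro H. exact (proj1 (fsup_lub S (fsup S)) (fle_refl _) a H). Qed.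

Lemma fle_meet_l (L : frame) (a b : L) : fle (fmeet a b) a.
Proof. exact (proj1 (proj1 (fmeet_glb a b (fmeet a b)) (fle_refl _))). Qed.

Lemma fle_meet_r (L : frame) (a b : L) : fle (fmeet a b) b.
Proof. exact (proj2 (proj1 (fmeet_glb a b (fmeet a b)) (fle_refl _))). Qed.

Lemma fle_meet_i (L : frame) (a b c : L) : fle c a -> fle c b -> fle c (fmeet a b).
Proof. intros H1 H2. apply fmeet_glb. split; assumption. Qed.

Lemma finf_glb (L : frame) (S : L -> Prop) c :
  fle c (finf S) <-> (forall a, S a -> fle c a).
Proof.
  unfold finf; split.
  - intros H a Sa. eapply fle_trans; [exact H|]. apply fsup_lub. intros b Hb. apply Hb, Sa.
  - intros H. apply fsup_ub. exact H.
Qed.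

Lemma sub_char (L : frame) (T : Type) (A B : T -> L) c :
  fle c (subX A B) <-> forall x, fle (fmeet c (A x)) (B x).
Proof.
  unfold subX; rewrite finf_glb; split.
  - intros H x. apply fimp_adj. apply H. exists x. reflexivity.
  - intros H a [x ->]. apply fimp_adj. apply H.
Qed.

Definition ftop (L : frame) : L := fsup (fun _ => True).
Definition fbot (L : frame) : L := fsup (fun _ => False).

Lemma fle_top (L : frame) (a : L) : fle a (ftop L).
Proof. apply fsup_ub. exact I. Qed.

Lemma meet_top_l (L : frame) (a : L) : fmeet (ftop L) a = a.
Proof. apply fle_antisym. apply fle_meet_r. apply fle_meet_i. apply fle_top. apply fle_refl. Qed.

Lemma meet_top_r (L : frame) (a : L) : fmeet a (ftop L) = a.
Proof. apply fle_antisym. apply fle_meet_l. apply fle_meet_i. apply fle_refl. apply fle_top. Qed.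

Definition leF (L : frame) (T : Type) (A B : T -> L) := forall x, fle (A x) (B x).

Lemma leF_antisym (L : frame) (T : Type) (A B : T -> L) : leF A B -> leF B A -> A = B.
Proof. intros H1 H2. extensionality x. apply fle_antisym; auto. Qed.

Lemma sub_le (L : frame) (T : Type) (A B : T -> L) : leF A B <-> fle (ftop L) (subX A B).
Proof.
  rewrite sub_char. unfold leF. split; intros H x; specialize (H x);
  rewrite ?meet_top_l in *; exact H.
Qed.

Lemma same_lb (L : frame) (a b : L) : (forall c, fle c a <-> fle c b) -> a = b.
Proof.
  intro H. apply fle_antisym. apply H, fle_refl. apply H, fle_refl.
Qed.

Lemma fjoin_ub (L : frame) (I : Type) (f : I -> L) i : fle (f i) (fjoin f).
Proof. apply fsup_ub. exists i. reflexivity. Qed.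

Lemma fjoin_lub (L : frame) (I : Type) (f : I -> L) c : (forall i, fle (f i) c) -> fle (fjoin f) c.
Proof. intro H. apply fsup_lub. intros a [i ->]. apply H. Qed.

Lemma cst_sub_char (L : frame) (T : Type) (a : L) (C : T -> L) c :
  fle c (subX (@cst L T a) C) <-> fle (fmeet c a) (subX (@cst L T (ftop L)) C).
Proof.
  rewrite !sub_char. unfold cst. split; intros H x; specialize (H x);
  rewrite ?meet_top_r in *; exact H.
Qed.

Lemma open_meet (L : frame) (X : LTop L) (A B : X -> L) :
  lopen A -> lopen B -> lopen (fun x => fmeet (A x) (B x)).
Proof. destruct (lopen_ax X) as [H _]. apply H. Qed.

Lemma open_join (L : frame) (X : LTop L) (I : Type) (A : I -> X -> L) :
  (forall i, lopen (A i)) -> lopen (fun x => fjoin (fun i => A i x)).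
Proof. destruct (lopen_ax X) as [_ [H _]]. apply H. Qed.

Lemma open_cst (L : frame) (X : LTop L) (a : L) : lopen (@cst L X a).
Proof. destruct (lopen_ax X) as [_ [_ H]]. apply H. Qed.

Lemma iso_frame (L : frame) (X Y : LTop L) (phi : (Y -> L) -> (X -> L))
 (Hop : forall B, lopen B -> lopen (phi B))
 (Hsurj : forall A, lopen A -> exists B, lopen B /\ phi B = A)
 (Hsub : forall B B', lopen B -> lopen B' -> subX (phi B) (phi B') = subX B B') :
 (forall B B', lopen B -> lopen B' ->
    phi (fun y => fmeet (B y) (B' y)) = (fun x => fmeet (phi B x) (phi B' x))) /\
 (forall (I : Type) (B : I -> Y -> L), (forall i, lopen (B i)) ->
    phi (fun y => fjoin (fun i => B i y)) = (fun x => fjoin (fun i => phi (B i) x))) /\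
 (forall a, phi (@cst L Y a) = @cst L X a).
Proof.
  assert (Hle : forall B B', lopen B -> lopen B' -> (leF B B' <-> leF (phi B) (phi B'))).
  { intros B B' HB HB'. rewrite !sub_le. rewrite Hsub by assumption. tauto. }
  split; [|split].
  - intros B B' HB HB'.
    assert (HM : lopen (fun y => fmeet (B y) (B' y))) by (apply open_meet; assumption).
    apply leF_antisym.
    + intro x. apply fle_meet_i.
      * apply (proj1 (Hle _ _ HM HB)). intro y. apply fle_meet_l.
      * apply (proj1 (Hle _ _ HM HB')). intro y. apply fle_meet_r.
    + destruct (Hsurj (fun x => fmeet (phi B x) (phi B' x))) as [D [HD E]].
      { apply open_meet; apply Hop; assumption. }
      rewrite <- E. apply (proj1 (Hle _ _ HD HM)).
      intro y. apply fle_meet_i.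
      * apply (proj2 (Hle _ _ HD HB)). rewrite E. intro x. apply fle_meet_l.
      * apply (proj2 (Hle _ _ HD HB')). rewrite E. intro x. apply fle_meet_r.
  - intros I B HB.
    assert (HJ : lopen (fun y => fjoin (fun i => B i y))) by (apply open_join; assumption).
    apply leF_antisym.
    + destruct (Hsurj (fun x => fjoin (fun i => phi (B i) x))) as [D [HD E]].
      { apply open_join. intro i. apply Hop, HB. }
      rewrite <- E. apply (proj1 (Hle _ _ HJ HD)).
      intro y. apply fjoin_lub. intro i.
      apply (proj2 (Hle _ _ (HB i) HD)). rewrite E. intro x.
      apply (fjoin_ub (fun i => phi (B i) x)).
    + intro x. apply fjoin_lub. intro i.
      apply (proj1 (Hle _ _ (HB i) HJ)). intro y. apply (fjoin_ub (fun i => B i y)).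
  - assert (Htop : phi (@cst L Y (ftop L)) = @cst L X (ftop L)).
    { apply leF_antisym.
      - intro x. apply fle_top.
      - destruct (Hsurj (@cst L X (ftop L)) (open_cst _ _)) as [D [HD E]].
        rewrite <- E. apply (proj1 (Hle _ _ HD (open_cst _ _))). intro y. apply fle_top. }
    intro a.
    assert (K : forall B, lopen B -> forall c,
       fle c (subX (phi (@cst L Y a)) (phi B)) <-> fle c (subX (@cst L X a) (phi B))).
    { intros B HB c. rewrite Hsub by (auto using open_cst).
      rewrite (cst_sub_char a (phi B) c), (cst_sub_char a B c).
      rewrite <- Htop. rewrite Hsub by (auto using open_cst). tauto. }
    apply leF_antisym.
    + destruct (Hsurj (@cst L X a) (open_cst _ _)) as [D [HD E]].
      apply sub_le. rewrite <- E. apply (K D HD). rewrite E.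
      apply sub_le. intro x. apply fle_refl.
    + apply sub_le. apply (K _ (open_cst _ _)). apply sub_le. intro x. apply fle_refl.
Qed.

Lemma mk_map (L : frame) (X Y : LTop L) (hY : Lsober Y) (phi : (Y -> L) -> (X -> L))
 (Hm : forall B B', lopen B -> lopen B' ->
    phi (fun y => fmeet (B y) (B' y)) = (fun x => fmeet (phi B x) (phi B' x)))
 (Hj : forall (I : Type) (B : I -> Y -> L), (forall i, lopen (B i)) ->
    phi (fun y => fjoin (fun i => B i y)) = (fun x => fjoin (fun i => phi (B i) x)))
 (Hc : forall a, phi (@cst L Y a) = @cst L X a) :
 exists j : X -> Y, forall B, lopen B -> preim j B = phi B.
Proof.
  assert (H : forall x : X, exists y : Y, forall B, lopen B -> phi B x = B y).
  { intro x. destruct hY as [_ hp]. destruct (hp (fun B => phi B x)) as [y Hy].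
    - split; [|split].
      + intros A B HA HB. rewrite (Hm A B HA HB). reflexivity.
      + intros I A HA. rewrite (Hj I A HA). reflexivity.
      + intros a. rewrite Hc. reflexivity.
    - exists y. exact Hy. }
  destruct (choice _ H) as [j Hjx]. exists j. intros B HB.
  extensionality x. unfold preim. symmetry. apply Hjx, HB.
Qed.

Lemma inv_ex (T U : Type) (OT : T -> Prop) (OU : U -> Prop) (psi : T -> U) (t0 : T)
 (Hs : forall u, OU u -> exists t, OT t /\ psi t = u) :
 exists h : U -> T, forall u, OU u -> OT (h u) /\ psi (h u) = u.
Proof.
  assert (H : forall u, exists t, OU u -> OT t /\ psi t = u).
  { intro u. destruct (classic (OU u)) as [Hu|Hu].
    - destruct (Hs u Hu) as [t Ht]. exists t. intros _. exact Ht.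
    - exists t0. intro Hu'. contradiction. }
  destruct (choice _ H) as [h Hh]. exists h. exact Hh.
Qed.

Lemma qh_sub (L : frame) (X Y : LTop L) (j : X -> Y) (hj : quasihomeo j) :
  forall B B', lopen B -> lopen B' -> subX (preim j B) (preim j B') = subX B B'.
Proof.
  intros B B' HB HB'. destruct hj as [hc [hi hs]].
  apply same_lb. intro c. rewrite !sub_char. split.
  - intros H y.
    assert (E : (fun y => fmeet (fmeet c (B y)) (B' y)) = (fun y => fmeet c (B y))).
    { apply hi.
      - apply open_meet; [apply open_meet; [apply (open_cst Y c)|exact HB]|exact HB'].
      - apply open_meet; [apply (open_cst Y c)|exact HB].
      - extensionality x. unfold preim. apply fle_antisym.
        + apply fle_meet_l.
        + apply fle_meet_i; [apply fle_refl|apply (H x)]. }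
    pose proof (equal_f E y) as Ey. simpl in Ey. rewrite <- Ey. apply fle_meet_r.
  - intros H x. apply H.
Qed.

Lemma qh_inv (L : frame) (X Y : LTop L) (j : X -> Y) (hj : quasihomeo j) :
  exists h : (X -> L) -> (Y -> L), Lorder_iso h /\
    forall A, lopen A -> lopen (h A) /\ preim j (h A) = A.
Proof.
  pose proof hj as [hc [hi hs]].
  destruct (inv_ex (OT := @lopen L Y) (OU := @lopen L X) (psi := preim j) (@cst L Y (ftop L)) hs)
    as [h Hh].
  exists h. split; [|exact Hh].
  split; [|split; [|split]].
  - intros A HA. apply Hh, HA.
  - intros A A' HA HA' E. rewrite <- (proj2 (Hh A HA)), <- (proj2 (Hh A' HA')), E. reflexivity.
  - intros B HB. exists (preim j B). split; [apply hc, HB|].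
    apply hi; [apply Hh, hc, HB | exact HB | apply Hh, hc, HB].
  - intros A A' HA HA'. rewrite <- (qh_sub hj) by (apply Hh; assumption).
    rewrite (proj2 (Hh A HA)), (proj2 (Hh A' HA')). reflexivity.
Qed.

Lemma iso_qh (L : frame) (X Y : LTop L) (hY : Lsober Y) (g : (X -> L) -> (Y -> L)) :
  Lorder_iso g -> exists j : X -> Y, quasihomeo j.
Proof.
  intros [go [gi [gs gsub]]].
  destruct (inv_ex (OT := @lopen L X) (OU := @lopen L Y) (psi := g) (@cst L X (ftop L)) gs)
    as [h Hh].
  assert (hg : forall A, lopen A -> h (g A) = A).
  { intros A HA. apply gi; [apply Hh, go, HA | exact HA | apply Hh, go, HA]. }
  destruct (iso_frame (phi := h)) as [Hm [Hj Hc]].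
  - intros B HB. apply Hh, HB.
  - intros A HA. exists (g A). split; [apply go, HA| apply hg, HA].
  - intros B B' HB HB'. rewrite <- gsub by (apply Hh; assumption).
    rewrite (proj2 (Hh B HB)), (proj2 (Hh B' HB')). reflexivity.
  - destruct (mk_map hY Hm Hj Hc) as [j Hjx]. exists j.
    split; [|split].
    + intros B HB. rewrite Hjx by exact HB. apply Hh, HB.
    + intros B B' HB HB' E. rewrite !Hjx in E by assumption.
      rewrite <- (proj2 (Hh B HB)), <- (proj2 (Hh B' HB')), E. reflexivity.
    + intros A HA. exists (g A). split; [apply go, HA|]. rewrite Hjx by (apply go, HA).
      apply hg, HA.
Qed.

Lemma qh_UP (L : frame) (X Y : LTop L) (j : X -> Y) (hj : quasihomeo j) :
  forall (Z : LTop L) (f : X -> Z), Lsober Z -> Lcontinuous f ->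
      exists g : Y -> Z, Lcontinuous g /\ (forall x, g (j x) = f x) /\
        (forall g' : Y -> Z, Lcontinuous g' -> (forall x, g' (j x) = f x) ->
           forall y, g' y = g y).
Proof.
  intros Z f hZ hf.
  pose proof hj as [hc [hi hs]].
  destruct (qh_inv hj) as [h [[ho [hinj [hsurj hsub]]] Hh]].
  destruct (iso_frame (phi := h) ho hsurj hsub) as [Hm [Hj Hc]].
  set (phi := fun C : Z -> L => h (preim f C)).
  destruct (mk_map (X := Y) (Y := Z) hZ (phi := phi)) as [g Hg].
  - intros C C' HC HC'. exact (Hm (preim f C) (preim f C') (hf C HC) (hf C' HC')).
  - intros I C HC. exact (Hj I (fun i => preim f (C i)) (fun i => hf (C i) (HC i))).
  - intros a. exact (Hc a).
  - exists g. split; [|split].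
    + intros C HC. rewrite Hg by exact HC. apply Hh, hf, HC.
    + intro x. apply (proj1 hZ). intros C HC. unfold pt_of.
      change (C (g (j x))) with (preim g C (j x)). rewrite Hg by exact HC.
      unfold phi. change (preim j (h (preim f C)) x = preim f C x).
      rewrite (proj2 (Hh _ (hf C HC))). reflexivity.
    + intros g' hg' Hg' y. apply (proj1 hZ). intros C HC. unfold pt_of.
      change (preim g' C y = preim g C y). rewrite Hg by exact HC.
      assert (E : preim g' C = phi C).
      { apply hi; [apply hg', HC | apply Hh, hf, HC |].
        unfold phi. rewrite (proj2 (Hh _ (hf C HC))). extensionality x. unfold preim. rewrite Hg'. reflexivity. }
      rewrite E. reflexivity.
Qed.

Definition npoint (L : frame) (X : LTop L) (p : (X -> L) -> L) : Prop :=
  is_point p /\ forall A, ~ lopen A -> p A = fbot L.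

Definition SXc (L : frame) (X : LTop L) := {p : (X -> L) -> L | npoint p}.

Definition Phi (L : frame) (X : LTop L) (A : X -> L) : SXc X -> L :=
  fun p => proj1_sig p A.

Definition SXopen (L : frame) (X : LTop L) (U : SXc X -> L) : Prop :=
  exists A, lopen A /\ U = Phi A.

Lemma SX_top (L : frame) (X : LTop L) : is_Ltopology (SXopen (X := X)).
Proof.
  split; [|split].
  - intros U V [A [HA ->]] [B [HB ->]]. exists (fun x => fmeet (A x) (B x)).
    split; [apply open_meet; assumption|].
    extensionality p. destruct p as [p [[pm [pj pc]] pn]]. unfold Phi; simpl.
    rewrite pm by assumption. reflexivity.
  - intros I U HU. destruct (choice _ HU) as [A HA].
    assert (E : U = fun i => Phi (A i)) by (extensionality i; apply HA). subst U.
    exists (fun x => fjoin (fun i => A i x)).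
    split; [apply open_join; intro i; apply HA|].
    extensionality p. destruct p as [p [[pm [pj pc]] pn]]. unfold Phi; simpl.
    rewrite pj by (intro i; apply HA). reflexivity.
  - intros a. exists (@cst L X a). split; [apply open_cst|].
    extensionality p. destruct p as [p [[pm [pj pc]] pn]]. unfold Phi; simpl.
    exact (eq_sym (pc a)).
Qed.

Definition SX (L : frame) (X : LTop L) : LTop L := mkLTop (SX_top X).

Lemma SX_sober (L : frame) (X : LTop L) : Lsober (SX X).
Proof.
  split.
  - intros [p Hp] [q Hq] H.
    assert (E : p = q).
    { extensionality A. destruct (classic (lopen A)) as [HA|HA].
      - exact (H (Phi A) (ex_intro _ A (conj HA eq_refl))).
      - rewrite (proj2 Hp A HA), (proj2 Hq A HA). reflexivity. }
    subst q. f_equal. apply proof_irrelevance.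
  - intros P [Pm [Pj Pc]].
    set (q := fun A : X -> L =>
                if excluded_middle_informative (lopen A) then P (Phi A) else fbot L).
    assert (qo : forall A, lopen A -> q A = P (Phi A)).
    { intros A HA. unfold q. destruct (excluded_middle_informative (lopen A)); [reflexivity|contradiction]. }
    assert (PhiO : forall A, lopen A -> @lopen L (SX X) (Phi A)).
    { intros A HA. exists A. split; [exact HA|reflexivity]. }
    assert (Hq : npoint q).
    { split; [split; [|split]|].
      - intros A B HA HB. rewrite !qo by (try apply open_meet; assumption).
        rewrite <- Pm by (apply PhiO; assumption). f_equal.
        extensionality r. unfold Phi. apply (proj1 (proj1 (proj2_sig r))); assumption.
      - intros I A HA. rewrite qo by (apply open_join; exact HA).
        transitivity (P (fun r => fjoin (fun i => Phi (A i) r))).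
        + f_equal. extensionality r. unfold Phi. apply (proj1 (proj2 (proj1 (proj2_sig r)))); assumption.
        + rewrite Pj by (intro i; apply PhiO, HA). f_equal. extensionality i. symmetry. apply qo, HA.
      - intros a. rewrite qo by apply open_cst.
        transitivity (P (@cst L (SX X) a)); [|apply Pc].
        f_equal. extensionality r. unfold Phi. apply (proj2 (proj2 (proj1 (proj2_sig r)))).
      - intros A HA. unfold q. destruct (excluded_middle_informative (lopen A)); [contradiction|reflexivity]. }
    exists (exist _ q Hq). intros U [A [HA ->]]. unfold pt_of, Phi at 2; simpl. symmetry. apply qo, HA.
Qed.

Definition etaf (L : frame) (X : LTop L) (x : X) : (X -> L) -> L :=
  fun A => if excluded_middle_informative (lopen A) then A x else fbot L.

Lemma etaf_open (L : frame) (X : LTop L) (x : X) A : lopen A -> etaf x A = A x.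
Proof. intro HA. unfold etaf. destruct (excluded_middle_informative (lopen A)); [reflexivity|contradiction]. Qed.

Lemma etaf_np (L : frame) (X : LTop L) (x : X) : npoint (etaf x).
Proof.
  split; [split; [|split]|].
  - intros A B HA HB. rewrite !etaf_open by (try apply open_meet; assumption). reflexivity.
  - intros I A HA. rewrite etaf_open by (apply open_join; exact HA).
    f_equal. extensionality i. symmetry. apply etaf_open, HA.
  - intros a. rewrite etaf_open by apply open_cst. reflexivity.
  - intros A HA. unfold etaf. destruct (excluded_middle_informative (lopen A)); [contradiction|reflexivity].
Qed.

Definition eta (L : frame) (X : LTop L) (x : X) : SX X := exist _ (etaf x) (etaf_np x).

Lemma preim_eta (L : frame) (X : LTop L) A : lopen A -> preim (@eta L X) (Phi A) = A.
Proof. intro HA. extensionality x. unfold preim, Phi, eta; simpl. apply etaf_open, HA. Qed.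

Lemma eta_qh (L : frame) (X : LTop L) : quasihomeo (@eta L X).
Proof.
  split; [|split].
  - intros U [A [HA ->]]. rewrite preim_eta by exact HA. exact HA.
  - intros U U' [A [HA ->]] [B [HB ->]] E. rewrite !preim_eta in E by assumption. subst. reflexivity.
  - intros A HA. exists (Phi A). split; [exists A; split; [exact HA|reflexivity]|]. apply preim_eta, HA.
Qed.

Lemma sobr_qh (L : frame) (X Y : LTop L) (hY : Lsober Y) :
  Lsobrification X Y -> exists j : X -> Y, quasihomeo j.
Proof.
  intros [_ [j [hjc hUP]]].
  pose proof (SX_sober X) as hSX. pose proof (eta_qh X) as heta.
  destruct (hUP (SX X) (@eta L X) hSX (proj1 heta)) as [g [hgc [hgj _]]].
  destruct (qh_UP heta hY hjc) as [k [hkc [hkj _]]].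
  destruct (hUP Y j hY hjc) as [m [_ [_ hmu]]].
  assert (kg : forall y, k (g y) = y).
  { intro y. rewrite (hmu (fun y => k (g y))), (hmu (fun y => y)); [reflexivity| | | |].
    - intros B HB. exact HB.
    - intro x. reflexivity.
    - intros B HB. exact (hgc _ (hkc _ HB)).
    - intro x. rewrite hgj, hkj. reflexivity. }
  exists j. split; [exact hjc|split].
  - intros B B' HB HB' E.
    assert (E2 : preim k B = preim k B').
    { apply (proj1 (proj2 heta)); [apply hkc, HB|apply hkc, HB'|].
      extensionality x. unfold preim. rewrite !hkj. exact (equal_f E x). }
    extensionality y. rewrite <- (kg y). exact (equal_f E2 (g y)).
  - intros A HA. exists (preim g (Phi A)). split.
    + apply hgc. exists A. split; [exact HA|reflexivity].
    + extensionality x. unfold preim. rewrite hgj. unfold Phi, eta; simpl. apply etaf_open, HA.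
Qed.

Theorem theorem3p9 (L : frame) (X Y : LTop L) (hY : Lsober Y) :
  (Lsobrification X Y <-> exists j : X -> Y, quasihomeo j) /\
  ((exists j : X -> Y, quasihomeo j) <->
     exists g : (X -> L) -> (Y -> L), Lorder_iso g).
Proof.
  split; split.
  - apply sobr_qh, hY.
  - intros [j hj]. split; [exact hY|]. exists j. split; [exact (proj1 hj)|].
    apply qh_UP, hj.
  - intros [j hj]. destruct (qh_inv hj) as [h [hiso _]]. exists h. exact hiso.
  - intros [g hg]. apply (iso_qh hY hg).
Qed.
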